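(* Let $n,\ell\in\mathbb Z$ with $n>2\ell\ge6$, let $q$ be a primitive $2\ell$-th root of unity in a field $k$, and let $w_1,w_2$ be non-integral. Then for every half-diagram $D$ in the standard basis of $\mathcal S_n(-n+2\ell)$ the hook product $h_3(D)$ is defined (its reduced expression specialises without a vanishing denominator), and $h_3(D)\neq0$ for some such $D$.
   Context: Setting: symplectic blob algebra $b_n^x(-[2],-[w_1],-[w_2],[w_1+1],[w_2+1],\kappa_{LR})$ (generators $e,e_1,\dots,e_{n-1},f$; basis of Temperley–Lieb diagrams whose lines may carry a left blob if deformable to the left edge without crossing lines and a right blob if deformable to the right edge). Quantum numbers: $[x]=\frac{q^x-q^{-x}}{q-q^{-1}}$; $w_i$ are formal, with $Q_i=q^{w_i}$ and $[w_i+x]=\frac{Q_iq^x-Q_i^{-1}q^{-x}}{q-q^{-1}}$; ''$w_i$ non-integral'' means $Q_i\notin\pm q^{\mathbb Z}$. Falling factorials $[w]_\ell!=[w][w-1]\cdots[w-\ell+1]$, $[\ell]!=[1][2]\cdots[\ell]$. The cell module $\mathcal S_n(-n+2\ell)$ has basis the half-diagrams $D$: $n$ vertices on a top edge, $\ell$ non-crossing arcs joining pairs of top vertices and $n-2\ell$ undecorated non-crossing propagating lines running to the bottom; an arc may carry a left blob if it can be deformed to touch the left edge without crossing lines, or a right blob if it can be deformed to the right edge. Number top vertices $1,\dots,n$ left to right and the bottom ends of propagating lines $n+1,\dots,2n-2\ell$ from right to left; each line $g$ is then $(a,a+2b+1)$ with $b\ge0$. Define $h_3(g)=[b+1]$ if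 $g$ is an undecorated arc; $1$ if $g$ is propagating and $a\equiv1,\dots,2\ell \pmod{4\ell}$; $-1$ if $g$ is propagating and $a\equiv 2\ell+1,\dots,4\ell\pmod{4\ell}$; $\left[\frac{a+2b+1}{2}\right]\left[\frac{2w_1-a+1}{2}\right]$ if $g$ has a left blob; $\left[\frac{n-a+1}{2}\right]\left[\frac{2w_2-n+a+2b+1}{2}\right]$ if $g$ has a right blob. Set $h_3(D)=[\ell]!\,[w_1]_\ell!\,[w_2]_\ell!\big/\prod_{g\in D}h_3(g)$, computed as a rational function in indeterminates $q,Q_1,Q_2$ with all cancellations performed before specialising $q$ (and $Q_1,Q_2$). *)

(* Defs.v *)
From HB Require Import structures.
From mathcomp Require Import all_boot all_order all_algebra.
From mathcomp Require Import fraction.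
From mathcomp Require Import mpoly.
Set Implicit Arguments. Unset Strict Implicit. Unset Printing Implicit Defensive.
Import Order.TTheory GRing.Theory Num.Theory.
Local Open Scope ring_scope.

(* A line g = (a, c) is stored with its kind; a is its smaller endpoint  *)
(* (a top vertex, numbered 1..n left to right) and c its other endpoint: *)
(* a top vertex for an arc, the bottom label n+1..2n-2l (numbered right  *)
(* to left) for a propagating line.  With c = a+2b+1, b = (c-a-1)/2.    *)
Inductive line_kind := Undec | LBlob | RBlob | Propag.

Record line := Line { la : nat; lc : nat; lk : line_kind }.

Definition is_prop (g : line) : bool := if lk g is Propag then true else false.
Definition is_arc (g : line) : bool := ~~ is_prop g.

Definition touches (v : nat) (g : line) : bool :=
  (la g == v) || (is_arc g && (lc g == v)).

Definition encloses (h g : line) : bool :=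
  [&& is_arc h, (la h < la g)%N & (lc g < lc h)%N].

Local Open Scope nat_scope.
Definition half_diagram (n l : nat) (D : seq line) : bool :=
  [&& count is_arc D == l,
      count is_prop D == n - 2 * l,
      all (fun v => count (touches v) D == 1) (iota 1 n),
      all (fun g => (1 <= la g) &&
             (if is_prop g then
                (la g <= n) &&
                (lc g == n + count (fun h => is_prop h && (la g <= la h)) D)
              else (la g < lc g) && (lc g <= n))) D,
      (* non-crossing *)
      all (fun g => all (fun h =>
             is_arc g ==>
               (if is_prop h then ~~ ((la g < la h) && (la h < lc g))
                else ~~ [&& la g < la h, la h < lc g & lc g < lc h])) D) D
    & (* blobs only on arcs deformable to the corresponding edge *)
      all (fun g =>
        match lk g with
        | LBlob => all (fun h => (is_prop h ==> (la g < la h)) && ~~ encloses h g) D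
        | RBlob => all (fun h => (is_prop h ==> (la h < la g)) && ~~ encloses h g) D
        | _ => true
        end) D].

Local Open Scope ring_scope.
Section RatFun.
Variable k : fieldType.

Definition ratfun := {fraction {mpoly k[3]}}.

Definition var (i : nat) : ratfun := FracField.tofrac ('X_(inord i) : {mpoly k[3]}).
Definition qv : ratfun := var 0.
Definition Q1v : ratfun := var 1.
Definition Q2v : ratfun := var 2.

Definition qint (x : int) : ratfun := (qv ^ x - qv ^ (- x)) / (qv - qv^-1).
(* [w + x] with Q = q^w *)
Definition qwint (Q : ratfun) (x : int) : ratfun :=
  (Q * qv ^ x - Q^-1 * qv ^ (- x)) / (qv - qv^-1).

Definition qfact (l : nat) : ratfun := \prod_(i < l) qint (i.+1)%:Z.
Definition qwfall (Q : ratfun) (l : nat) : ratfun := \prod_(i < l) qwint Q (- (i%:Z)).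

Definition h3_line (n l : nat) (g : line) : ratfun :=
  let a := la g in
  let b := (lc g - a - 1)./2 in
  match lk g with
  | Undec => qint (b.+1)%:Z
  | Propag => if ((a - 1) %% (4 * l) < 2 * l)%N then 1 else -1
  | LBlob => qint ((a + 2 * b + 1)./2)%:Z * qwint Q1v (- ((a - 1)./2)%:Z)
  | RBlob => qint ((n - a + 1)./2)%:Z * qwint Q2v (- ((n - (a + 2 * b + 1))./2)%:Z)
  end.

Definition h3 (n l : nat) (D : seq line) : ratfun :=
  qfact l * qwfall Q1v l * qwfall Q2v l / \prod_(g <- D) h3_line n l g.

Definition point (q Q1 Q2 : k) : 'I_3 -> k := fun i => nth 0 [:: q; Q1; Q2] i.

(* f is defined at p (it has a representation P/R with R(p) <> 0, i.e.   *)
(* the denominator of its reduced form does not vanish at p) and its     *)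
(* specialisation at p is x.                                             *)
Definition specializes_to (f : ratfun) (p : 'I_3 -> k) (x : k) : Prop :=
  exists P R : {mpoly k[3]},
    R.@[p] != 0 /\ f = FracField.tofrac P / FracField.tofrac R /\ x = P.@[p] / R.@[p].

(* w non-integral: Q = q^w is a unit not in +- q^Z *)
Definition nonintegral (q Q : k) : Prop :=
  Q != 0 /\ forall m : int, Q != q ^ m /\ Q != - q ^ m.

End RatFun.

(* Main.v *)
Require Import Defs.
From HB Require Import structures.
From mathcomp Require Import all_boot all_order all_algebra.
From mathcomp Require Import fraction mpoly.
From mathcomp Require Import ring zify.
Import GRing.Theory.
Set Implicit Arguments. Unset Strict Implicit.
Local Open Scope ring_scope.

Definition lk2n (x : line_kind) : nat :=
  match x with Undec => 0 | LBlob => 1 | RBlob => 2 | Propag => 3 end.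
Definition n2lk (m : nat) : line_kind :=
  match m with 0 => Undec | 1 => LBlob | 2 => RBlob | _ => Propag end.
Lemma lkK : cancel lk2n n2lk. Proof. by case. Qed.
HB.instance Definition _ := Equality.copy line_kind (can_type lkK).
Definition l2t (g : line) := (la g, lc g, lk g).
Definition t2l (t : nat * nat * line_kind) := Line t.1.1 t.1.2 t.2.
Lemma lK : cancel l2t t2l. Proof. by case. Qed.
HB.instance Definition _ := Equality.copy line (can_type lK).

Lemma fracB (F : fieldType) (a b c d : F) :
  b != 0 -> d != 0 -> a / b - c / d = (a * d - c * b) / (b * d).
Proof. by move=> hb hd; field; apply/andP. Qed.

Section Alg.
Variable k : fieldType.
Variable p : 'I_3 -> k.
Local Notation S f x := (@specializes_to k f p x).
Local Notation tf P := (FracField.tofrac P : ratfun k).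

Lemma S_frac (P : {mpoly k[3]}) : S (tf P) P.@[p].
Proof.
exists P, 1; rewrite rmorph1 oner_neq0 tofrac1 !divr1; split=> //.
Qed.

Lemma S_mul f g x y : S f x -> S g y -> S (f * g) (x * y).
Proof.
move=> [P1 [R1 [h1 [-> ->]]]] [P2 [R2 [h2 [-> ->]]]].
exists (P1 * P2), (R1 * R2); rewrite !mevalM mulf_neq0 //.
by split=> //; split; rewrite ?tofracM invfM mulrACA.
Qed.

Lemma S_inv f x : S f x -> x != 0 -> S f^-1 x^-1.
Proof.
move=> [P [R [h [-> ->]]]] hx.
have hP : P.@[p] != 0 by apply: contraNneq hx => ->; rewrite mul0r.
by exists R, P; rewrite !invf_div.
Qed.

Lemma S_1 : S 1 1.
Proof. by rewrite -tofrac1 -(rmorph1 (meval p)); apply: S_frac. Qed.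

Lemma S_opp f x : S f x -> S (- f) (- x).
Proof.
move=> [P [R [h [-> ->]]]]; exists (- P), R; rewrite mevalN h.
split=> //; split; last by rewrite mulNr.
by rewrite -[- P]sub0r tofracB tofrac0 sub0r mulNr.
Qed.

Lemma S_sub f g x y : S f x -> S g y -> S (f - g) (x - y).
Proof.
move=> [P1 [R1 [h1 [-> ->]]]] [P2 [R2 [h2 [-> ->]]]].
have r1 : tf (R1) != 0 by rewrite tofrac_eq0; apply: contraNneq h1 => ->; rewrite rmorph0.
have r2 : tf (R2) != 0 by rewrite tofrac_eq0; apply: contraNneq h2 => ->; rewrite rmorph0.
exists (P1 * R2 - P2 * R1), (R1 * R2); rewrite !mevalB !mevalM mulf_neq0 //.
split=> //; split.
  rewrite tofracB !tofracM.
  exact: (@fracB (ratfun k) _ _ _ _ r1 r2).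
exact: (@fracB k _ _ _ _ h1 h2).
Qed.

Lemma S_expn f x m : S f x -> S (f ^+ m) (x ^+ m).
Proof.
move=> h; elim: m => [|m IH]; first by rewrite !expr0; exact: S_1.
by rewrite !exprS; apply: S_mul.
Qed.

Lemma S_exprz f x (z : int) : S f x -> x != 0 -> S (f ^ z) (x ^ z).
Proof.
move=> h hx; case: z => m /=; first exact: S_expn.
by apply: S_inv; [apply: S_expn | rewrite expf_neq0].
Qed.

Lemma S_div f g x y : S f x -> S g y -> y != 0 -> S (f / g) (x / y).
Proof. by move=> hf hg hy; apply: S_mul => //; apply: S_inv. Qed.


Lemma S_var i : S (var k i) (p (inord i)).
Proof. by have := S_frac 'X_(inord i); rewrite mevalXU. Qed.

End Alg.

Lemma yinv_neq0 (F : fieldType) (y : F) : y != 0 -> y ^+ 2 != 1 -> y - y^-1 != 0.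
Proof.
move=> hy; apply: contra; rewrite subr_eq0 => /eqP e.
by rewrite expr2 {2}e mulfV.
Qed.

Definition kint (k : fieldType) (q : k) (x : int) := (q ^ x - q ^ (- x)) / (q - q^-1).
Definition kwint (k : fieldType) (q Q : k) (x : int) :=
  (Q * q ^ x - Q^-1 * q ^ (- x)) / (q - q^-1).

Arguments kint {k}.
Arguments kwint {k}.
Section Alg2.
Variable k : fieldType.
Variables q Q1 Q2 : k.
Local Notation p := (point q Q1 Q2).
Local Notation S f x := (@specializes_to k f p x).

Lemma S_qv : S (qv k) q.
Proof. by have := @S_var k p 0; rewrite /point inordK. Qed.
Lemma S_Q1v : S (Q1v k) Q1.
Proof. by have := @S_var k p 1; rewrite /point inordK. Qed.
Lemma S_Q2v : S (Q2v k) Q2.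
Proof. by have := @S_var k p 2; rewrite /point inordK. Qed.

Hypothesis q0 : q != 0.
Hypothesis qq : q - q^-1 != 0.

Lemma S_qint x : S (qint k x) (kint q x).
Proof.
apply: S_div => //; last by apply: S_sub; [exact: S_qv| apply: S_inv => //; exact: S_qv].
by apply: S_sub; apply: S_exprz => //; exact: S_qv.
Qed.

Lemma S_qwint Qv Q x : S Qv Q -> Q != 0 -> S (qwint Qv x) (kwint q Q x).
Proof.
move=> hQ Q0.
apply: S_div => //; last by apply: S_sub; [exact: S_qv| apply: S_inv => //; exact: S_qv].
apply: S_sub; apply: S_mul; (try exact: hQ); (try exact: (S_inv hQ Q0)); apply: S_exprz => //; exact: S_qv.
Qed.

End Alg2.

Lemma q0_of (k : fieldType) (q : k) : q - q^-1 != 0 -> q != 0.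
Proof. by apply: contraNneq => ->; rewrite invr0 subrr. Qed.

Lemma kint_neq0 (k : fieldType) (q : k) (l m : nat) :
  (2 * l)%N.-primitive_root q -> (0 < m)%N -> ~~ (l %| m)%N -> q - q^-1 != 0 ->
  kint q m != 0.
Proof.
move=> pr m0 nd qq; have q0 := q0_of qq.
rewrite /kint mulf_neq0 ?invr_neq0 // -invr_expz.
have -> : q ^ (m%:Z) = q ^+ m by [].
apply: yinv_neq0; first by rewrite expf_neq0.
by rewrite -exprM -(prim_order_dvd pr) [(2 * l)%N]mulnC dvdn_pmul2r.
Qed.

Lemma kwint_neq0 (k : fieldType) (q Q : k) (x : int) :
  nonintegral q Q -> q - q^-1 != 0 -> kwint q Q x != 0.
Proof.
move=> [Q0 nQ] qq; have q0 := q0_of qq.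
rewrite /kwint mulf_neq0 ?invr_neq0 //.
have -> : Q^-1 * q ^ (-x) = (Q * q ^ x)^-1 by rewrite invfM -invr_expz mulrC.
have y0 : Q * q ^ x != 0 by rewrite mulf_neq0 // expfz_neq0.
apply: yinv_neq0 => //; rewrite sqrf_eq1.
have hQ : Q = (Q * q ^ x) * q ^ (-x) by rewrite -invr_expz mulfK ?expfz_neq0.
case: (nQ (- x)) => n1 n2.
apply/norP; split.
  by apply: contra n1 => /eqP e; rewrite {1}hQ e mul1r.
by apply: contra n2 => /eqP e; rewrite {1}hQ e mulN1r.
Qed.

Section RF.
Variable k : fieldType.

Lemma qvXn_neq1 (j : nat) : (0 < j)%N -> qv k ^+ j != 1.
Proof.
move=> j0; rewrite /qv /var -tofracXn -tofrac1 tofrac_eq.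
apply/eqP => h; have := congr1 (meval (fun _ => (0 : k))) h.
rewrite rmorphXn rmorph1 /= mevalXU expr0n eqn0Ngt j0 /= => /eqP.
by rewrite eq_sym oner_eq0.
Qed.



Lemma qv_neq0 : qv k != 0.
Proof.
rewrite /qv /var tofrac_eq0; apply/eqP => h.
have := congr1 (meval (fun _ => (1 : k))) h.
by rewrite rmorph0 mevalXU => /eqP; rewrite oner_eq0.
Qed.

Lemma qint_neq0 (m : nat) : (0 < m)%N -> qint k m != 0.
Proof.
move=> m0; have q0 := qv_neq0.
rewrite /qint; apply: mulf_neq0; last first.
  rewrite invr_eq0; apply: yinv_neq0; [exact: q0 | exact: (qvXn_neq1 (isT : (0 < 2)%N))].
rewrite -invr_expz; have -> : qv k ^ (m%:Z) = qv k ^+ m by [].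
apply: yinv_neq0; first by rewrite expf_neq0.
by rewrite -exprM qvXn_neq1 // muln2 double_gt0.
Qed.
End RF.

Lemma cancel_lem (F : fieldType) (A c B C w E : F) :
  c != 0 -> (A * c * B * C) / (c * w * E) = (A * B * C) / (w * E).
Proof.
move=> c0; rewrite !invfM.
transitivity (c * c^-1 * (A * B * C * (w^-1 * E^-1))); first by ring.
by rewrite mulfV // mul1r.
Qed.

Definition mq (n : nat) (g : line) : nat :=
  let a := la g in let b := (lc g - a - 1)./2 in
  match lk g with
  | Undec => b.+1
  | LBlob => (a + 2 * b + 1)./2
  | RBlob => (n - a + 1)./2
  | Propag => 0
  end%N.

Definition crit (n l : nat) (g : line) : bool := is_arc g && (mq n g == l).

Section Main.
Variable k : fieldType.
Variables (n l : nat) (q Q1 Q2 : k).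
Local Notation p := (point q Q1 Q2).
Local Notation S f x := (@specializes_to k f p x).

Definition hq (g : line) : ratfun k := if is_prop g then 1 else qint k (mq n g)%:Z.
Definition wf (g : line) : ratfun k :=
  let a := la g in let b := (lc g - a - 1)./2 in
  match lk g with
  | Undec => 1
  | Propag => if ((a - 1) %% (4 * l) < 2 * l)%N then 1 else -1
  | LBlob => qwint (Q1v k) (- ((a - 1)./2)%:Z)
  | RBlob => qwint (Q2v k) (- ((n - (a + 2 * b + 1))./2)%:Z)
  end.
Definition hv (g : line) : k := if is_prop g then 1 else kint q (mq n g)%:Z.
Definition wv (g : line) : k :=
  let a := la g in let b := (lc g - a - 1)./2 in
  match lk g with
  | Undec => 1
  | Propag => if ((a - 1) %% (4 * l) < 2 * l)%N then 1 else -1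
  | LBlob => kwint q Q1 (- ((a - 1)./2)%:Z)
  | RBlob => kwint q Q2 (- ((n - (a + 2 * b + 1))./2)%:Z)
  end.

Lemma h3_line_split g : h3_line k n l g = hq g * wf g.
Proof. by case: g => a c [] ; rewrite /h3_line /hq /wf /= ?mulr1 ?mul1r. Qed.

Hypothesis pr : (2 * l)%N.-primitive_root q.
Hypothesis l1 : (1 < l)%N.
Hypothesis nQ1 : nonintegral q Q1.
Hypothesis nQ2 : nonintegral q Q2.



Lemma qq : q - q^-1 != 0.
Proof.
have q0 : q != 0.
  apply/eqP => q0; have := prim_expr_order pr; rewrite q0 expr0n.
  have hl : (2 * l == 0)%N = false by apply/negbTE; rewrite muln_eq0 /= -lt0n ltnW.
  by rewrite hl mulr0n => /eqP; rewrite eq_sym oner_eq0.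
apply: yinv_neq0 => //.
by rewrite -(prim_order_dvd pr) gtnNdvd //; lia.
Qed.
Let q0 := q0_of qq.

Lemma S_hq g : S (hq g) (hv g).
Proof. rewrite /hq /hv; case: ifP => _; [exact: S_1 | exact: S_qint q0 qq _]. Qed.

Lemma S_wf g : S (wf g) (wv g).
Proof.
rewrite /wf /wv; case: (lk g).
- exact: S_1.
- apply: S_qwint q0 qq _ _ _ (S_Q1v _ _ _) _; by case: nQ1.
- apply: S_qwint q0 qq _ _ _ (S_Q2v _ _ _) _; by case: nQ2.
- by case: ifP => _; [exact: S_1 | apply: S_opp; exact: S_1].
Qed.

Lemma wv_neq0 g : wv g != 0.
Proof.
rewrite /wv; case: (lk g).
- exact: oner_neq0.
- exact: kwint_neq0 nQ1 qq.
- exact: kwint_neq0 nQ2 qq.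
- by case: ifP => _; rewrite ?oppr_eq0 oner_neq0.
Qed.

Lemma hv_neq0 g : is_prop g || (0 < mq n g < l)%N -> hv g != 0.
Proof.
rewrite /hv; case: ifP => _ /=; first by move=> _; rewrite oner_neq0.
case/andP => m0 ml; exact: (kint_neq0 pr m0 (negbT (gtnNdvd m0 ml)) qq).
Qed.

Lemma prod_S (I : Type) (r : seq I) (P : pred I) (F : I -> ratfun k) (Fv : I -> k) :
  (forall i, P i -> S (F i) (Fv i) /\ Fv i != 0) ->
  S (\prod_(i <- r | P i) F i) (\prod_(i <- r | P i) Fv i) /\
  \prod_(i <- r | P i) Fv i != 0.
Proof.
move=> H; apply: (big_ind2 (fun f x => S f x /\ x != 0)).
- by split; [exact: S_1 | exact: oner_neq0].
- by move=> a b c d [h1 h2] [h3 h4]; split; [exact: S_mul | exact: mulf_neq0].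
- exact: H.
Qed.

Lemma prod_S0 (I : Type) (r : seq I) (P : pred I) (F : I -> ratfun k) (Fv : I -> k) :
  (forall i, P i -> S (F i) (Fv i)) ->
  S (\prod_(i <- r | P i) F i) (\prod_(i <- r | P i) Fv i).
Proof.
move=> H; apply: (big_ind2 (fun f x => S f x)).
- exact: S_1.
- by move=> a b c d h1 h3; exact: S_mul.
- exact: H.
Qed.

Lemma S_qwfall Qv Q : S Qv Q -> nonintegral q Q ->
  exists x, S (qwfall Qv l) x /\ x != 0.
Proof.
move=> hQ nQ; have [Q0 _] := nQ.
eexists; apply: prod_S => i _; split.
  exact: S_qwint q0 qq _ _ _ hQ Q0.
exact: kwint_neq0 nQ qq.
Qed.

Lemma main_alg (D : seq line) :
  (forall g, g \in D -> is_arc g -> (0 < mq n g <= l)%N) ->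
  (forall g1 g2, g1 \in D -> g2 \in rem g1 D -> crit n l g1 -> crit n l g2 -> False) ->
  (has (crit n l) D -> exists x, S (h3 k n l D) x /\ x != 0) /\
  (exists x, S (h3 k n l D) x).
Proof.
move=> Hb Hu.
have ncok : forall g, g \in D -> ~~ crit n l g ->
    S (h3_line k n l g) (hv g * wv g) /\ hv g * wv g != 0.
  move=> g gD nc; rewrite h3_line_split; split; first exact: S_mul (S_hq g) (S_wf g).
  rewrite mulf_neq0 ?wv_neq0 // hv_neq0 //.
  case: (boolP (is_prop g)) => //= pg.
  have := Hb g gD pg; move: nc; rewrite /crit /is_arc pg /= => nc /andP [m0 ml].
  by rewrite m0 /= ltn_neqAle nc ml.
have [w1 [Sw1 w1n]] := S_qwfall (S_Q1v q Q1 Q2) nQ1.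
have [w2 [Sw2 w2n]] := S_qwfall (S_Q2v q Q1 Q2) nQ2.
have [l' el] : exists l', l = l'.+1 by exists l.-1; rewrite prednK // ltnW.
have Hqf : qfact k l = (\prod_(i < l') qint k (i.+1)%:Z) * qint k l.
  by rewrite /qfact el big_ord_recr.
have il : forall i : 'I_l', (i.+1 < l)%N by move=> i; rewrite el ltnS ltn_ord.
have [Sf fn] := prod_S (index_enum 'I_l') (P := xpredT)
   (F := fun i : 'I_l' => qint k (i.+1)%:Z) (Fv := fun i : 'I_l' => kint q (i.+1)%:Z)
   (fun i _ => conj (S_qint Q1 Q2 q0 qq _)
      (kint_neq0 pr (ltn0Sn i) (negbT (gtnNdvd (ltn0Sn i) (il i))) qq)).
have partb : has (crit n l) D -> exists x, S (h3 k n l D) x /\ x != 0.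
  move=> /hasP [g0 g0D cg0].
  have e : \prod_(g <- D) h3_line k n l g =
      h3_line k n l g0 * \prod_(g <- rem g0 D | g \in rem g0 D) h3_line k n l g.
    by rewrite (perm_big _ (perm_to_rem g0D)) big_cons -big_seq.
  have [Sd dn] := prod_S (rem g0 D) (P := fun g => g \in rem g0 D)
     (F := h3_line k n l) (Fv := fun g => hv g * wv g)
     (fun g gr => ncok g (mem_rem gr)
        (introN idP (fun cg => Hu g0 g g0D gr cg0 cg))).
  have hg0 : h3_line k n l g0 = qint k l * wf g0.
    move: cg0 => /andP [ar /eqP ml]; rewrite /is_arc in ar.
    by rewrite h3_line_split /hq (negbTE ar) ml.
  rewrite /h3 Hqf e hg0 cancel_lem; last by apply: qint_neq0; rewrite el.
  eexists; split.
    apply: S_div; [apply: S_mul; [apply: S_mul|] | apply: S_mul |].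
    - exact: Sf.
    - exact: Sw1.
    - exact: Sw2.
    - exact: S_wf.
    - exact: Sd.
    - by rewrite mulf_neq0 ?wv_neq0.
  by rewrite mulf_neq0 ?invr_eq0 ?mulf_neq0 ?wv_neq0.
split=> //.
case: (boolP (has (crit n l) D)) => [hc | hnc].
  by have [x [hx _]] := partb hc; exists x.
have [Sd dn] := prod_S (D) (P := fun g => g \in D)
     (F := h3_line k n l) (Fv := fun g => hv g * wv g)
     (fun g gD => ncok g gD (hasPn hnc g gD)).
rewrite /h3 big_seq; eexists; apply: S_div => //.
apply: S_mul; [apply: S_mul|]; [|exact: Sw1|exact: Sw2].
rewrite Hqf; apply: S_mul; [exact: Sf | exact: S_qint Q1 Q2 q0 qq _].
  exact: Sd.
exact: dn.
Qed.

End Main.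

Local Close Scope ring_scope.

Lemma count_or (T : Type) (a b : pred T) s :
  count (fun x => a x || b x) s <= count a s + count b s.
Proof. by elim: s => //= x s IH; case: (a x); case: (b x) => /=; lia. Qed.

Lemma count_eq_iota x m k : count (fun v => x == v) (iota m k) <= 1.
Proof.
rewrite (@eq_count _ _ (pred1 x)); last by move=> v; rewrite /= eq_sym.
by rewrite count_uniq_mem ?iota_uniq // leq_b1.
Qed.

Lemma count_at_le (s : seq line) m k :
  count (fun v => has (fun h => is_arc h && touches v h) s) (iota m k)
  <= 2 * count is_arc s.
Proof.
elim: s => [|h s IH] /=; first by elim: (iota m k).
apply: leq_trans (count_or _ _ _) _.
have : count (fun v => is_arc h && touches v h) (iota m k) <= 2 * is_arc h.
  case: (boolP (is_arc h)) => ah /=; last first.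
    by elim: (iota m k).
  rewrite /touches ah /=; apply: leq_trans (count_or _ _ _) _.
  have := count_eq_iota (la h) m k; have := count_eq_iota (lc h) m k.
  by move=> h1 h2; exact: (leq_add h2 h1).
by lia.
Qed.

Lemma iota_split n x k : 1 <= x -> x + k <= n + 1 ->
  iota 1 n = iota 1 (x - 1) ++ iota x k ++ iota (x + k) (n + 1 - (x + k)).
Proof.
move=> x1 xk.
have e : iota 1 n = iota 1 (x - 1) ++ iota (1 + (x - 1)) (k + (n + 1 - (x + k))).
  by rewrite -iotaD; congr iota; lia.
rewrite e iotaD; have -> : 1 + (x - 1) = x by lia.
by [].
Qed.

Lemma count_interval (P : pred nat) n x k : 1 <= x -> x + k <= n + 1 ->
  (forall v, x <= v < x + k -> P v) ->
  k + (has P (iota 1 (x - 1)) || has P (iota (x + k) (n + 1 - (x + k))))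
  <= count P (iota 1 n).
Proof.
move=> x1 xk H; rewrite (iota_split x1 xk) !count_cat.
have -> : count P (iota x k) = k.
  rewrite (@eq_in_count _ P predT) ?count_predT ?size_iota //.
  by move=> v; rewrite mem_iota => /H ->.
case: (boolP (has P (iota 1 (x - 1)))) => h1 /=.
  by move: h1; rewrite has_count; lia.
case: (boolP (has P _)) => h2 /=.
  by move: h2; rewrite has_count; lia.
lia.
Qed.

Section Comb.
Variables (n l : nat) (D : seq line).
Hypothesis HD : half_diagram n l D.
Hypothesis Hl3 : 6 <= 2 * l.
Hypothesis Hnl : 2 * l < n.

Definition at_ v := has (fun h => is_arc h && touches v h) D.

Lemma Harc : count is_arc D = l.
Proof. by case/and3P: HD => /eqP. Qed.

Lemma Htouch v : 1 <= v <= n -> count (touches v) D = 1.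
Proof.
move=> hv; case/and3P: HD => _ _ /and4P [/allP Ht _ _ _].
by apply/eqP; apply: Ht; rewrite mem_iota; lia.
Qed.

Lemma Hend g : g \in D -> 1 <= la g /\
  (if is_prop g then (la g <= n) &&
      (lc g == n + count (fun h => is_prop h && (la g <= la h)) D)
   else (la g < lc g) && (lc g <= n)).
Proof.
move=> gD; case/and3P: HD => _ _ /and4P [_ /allP He _ _].
by case/andP: (He g gD) => -> ->.
Qed.

Lemma Hnc g h : g \in D -> h \in D -> is_arc g ->
  (if is_prop h then ~~ ((la g < la h) && (la h < lc g))
   else ~~ [&& la g < la h, la h < lc g & lc g < lc h]).
Proof.
move=> gD hD ag; case/and3P: HD => _ _ /and4P [_ _ /allP Hn _].
by move: (Hn g gD) => /allP /(_ h hD); rewrite ag.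
Qed.

Lemma Hbl g h : g \in D -> h \in D ->
  match lk g with
  | LBlob => (is_prop h ==> (la g < la h)) && ~~ encloses h g
  | RBlob => (is_prop h ==> (la h < la g)) && ~~ encloses h g
  | _ => true
  end.
Proof.
move=> gD hD; case/and3P: HD => _ _ /and4P [_ _ _ /allP Hb].
move: (Hb g gD); case: (lk g) => //; by move/allP/(_ h hD).
Qed.

Lemma count_at : count at_ (iota 1 n) <= 2 * l.
Proof. by rewrite -Harc; apply: count_at_le. Qed.

Lemma not_at_prop v : 1 <= v <= n -> ~~ at_ v ->
  exists2 h, h \in D & is_prop h && (la h == v).
Proof.
move=> hv na; have := Htouch hv => c1.
have : has (touches v) D by rewrite has_count c1.
case/hasP => h hD th; exists h => //.
case: (boolP (is_prop h)) => ph /=.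
  by move: th; rewrite /touches /is_arc ph /= orbF eq_sym.
by move: na => /hasP; case; exists h => //; rewrite /is_arc ph.
Qed.

Lemma arc_range g : g \in D -> is_arc g -> 1 <= la g < lc g /\ lc g <= n.
Proof.
move=> gD; rewrite /is_arc; case: (Hend gD) => a1.
by case: (is_prop g) => //= /andP [-> ->] _; rewrite a1.
Qed.

Lemma arc_interval g v : g \in D -> is_arc g -> la g <= v <= lc g -> at_ v.
Proof.
move=> gD ag hv; case: (arc_range gD ag) => r1 r2.
case: (boolP (at_ v)) => // na.
case: (not_at_prop _ na); first by lia.
move=> h hD /andP [ph /eqP hv'].
have := Hnc gD hD ag; rewrite ph.
case: (ltnP (la g) v) => c1; last first.
  have ev : v = la g by lia.
  by move: na => /hasP; case; exists g => //; rewrite ag /touches ev eqxx.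
case: (ltnP v (lc g)) => c2; first by rewrite hv' c1 c2.
have ev : v = lc g by lia.
by move: na => /hasP; case; exists g => //; rewrite ag /touches ag ev eqxx orbT.
Qed.

Lemma lblob_interval g v : g \in D -> lk g = LBlob -> 1 <= v <= lc g -> at_ v.
Proof.
move=> gD kg hv; have ag : is_arc g by rewrite /is_arc /is_prop kg.
case: (arc_range gD ag) => r1 r2.
case: (leqP (la g) v) => c1; first by apply: (arc_interval gD ag); lia.
case: (boolP (at_ v)) => // na.
case: (not_at_prop _ na); first by lia.
move=> h hD /andP [ph /eqP hv'].
have := Hbl gD hD; rewrite kg ph /= => /andP [hh _].
by lia.
Qed.

Lemma rblob_interval g v : g \in D -> lk g = RBlob -> la g <= v <= n -> at_ v.
Proof.
move=> gD kg hv; have ag : is_arc g by rewrite /is_arc /is_prop kg.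
case: (arc_range gD ag) => r1 r2.
case: (leqP v (lc g)) => c1; first by apply: (arc_interval gD ag); lia.
case: (boolP (at_ v)) => // na.
case: (not_at_prop _ na); first by lia.
move=> h hD /andP [ph /eqP hv'].
have := Hbl gD hD; rewrite kg ph /= => /andP [hh _].
by lia.
Qed.

Lemma interval_le x k : 1 <= x -> x + k <= n + 1 ->
  (forall v, x <= v < x + k -> at_ v) -> k <= 2 * l.
Proof.
move=> h1 h2 h3; have := count_interval h1 h2 h3; have := count_at; lia.
Qed.

Lemma interval_strict x k w : 1 <= x -> x + k <= n + 1 ->
  (forall v, x <= v < x + k -> at_ v) -> 1 <= w <= n -> at_ w ->
  ~~ (x <= w < x + k) -> k + 1 <= 2 * l.
Proof.
move=> h1 h2 h3 hw aw nw; have := count_interval h1 h2 h3; have := count_at.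
have -> : has at_ (iota 1 (x - 1)) || has at_ (iota (x + k) (n + 1 - (x + k))).
  case: (ltnP w x) => c.
    by apply/orP; left; apply/hasP; exists w => //; rewrite mem_iota; lia.
  apply/orP; right; apply/hasP; exists w => //; rewrite mem_iota.
  by move: nw; rewrite c /= -leqNgt; lia.
by move=> /= a b; lia.
Qed.

Lemma mq_bound g : g \in D -> is_arc g -> 0 < mq n g <= l.
Proof.
move=> gD ag; case: (arc_range gD ag) => r1 r2.
rewrite /mq; case kg: (lk g).
- have := @interval_le (la g) (lc g - la g + 1).
  rewrite -!divn2 => H.
  have : lc g - la g + 1 <= 2 * l.
    by apply: H; [lia | lia | move=> v hv; apply: (arc_interval gD ag); lia].
  by lia.
- have := @interval_le 1 (lc g).
  rewrite -!divn2 => H.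
  have : lc g <= 2 * l.
    by apply: H; [lia | lia | move=> v hv; apply: (lblob_interval gD kg); lia].
  by lia.
- have := @interval_le (la g) (n - la g + 1).
  rewrite -!divn2 => H.
  have : n - la g + 1 <= 2 * l.
    by apply: H; [lia | lia | move=> v hv; apply: (rblob_interval gD kg); lia].
  by lia.
- by move: ag; rewrite /is_arc /is_prop kg.
Qed.

Lemma crit_info g : g \in D -> crit n l g ->
  exists x, [/\ 1 <= x, x + 2 * l <= n + 1,
    (forall v, x <= v < x + 2 * l -> at_ v) &
    [\/ [/\ lk g = Undec, la g = x & lc g = x + 2 * l - 1],
         [/\ lk g = LBlob, x = 1 & lc g = 2 * l] |
         [/\ lk g = RBlob, la g = x & x + 2 * l = n + 1]]].
Proof.
move=> gD /andP [ag /eqP cm]; case: (arc_range gD ag) => r1 r2.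
move: cm; rewrite /mq; case kg: (lk g) => cm.
- have := @interval_le (la g) (lc g - la g + 1).
  rewrite -!divn2 in cm * => H.
  have : lc g - la g + 1 <= 2 * l.
    by apply: H; [lia | lia | move=> v hv; apply: (arc_interval gD ag); lia].
  move=> hb; exists (la g); split; [lia | lia | | apply: Or31; split => //; lia].
  by move=> v hv; apply: (arc_interval gD ag); lia.
- have := @interval_le 1 (lc g).
  rewrite -!divn2 in cm * => H.
  have : lc g <= 2 * l.
    by apply: H; [lia | lia | move=> v hv; apply: (lblob_interval gD kg); lia].
  move=> hb; exists 1; split; [lia | lia | | apply: Or32; split => //; lia].
  by move=> v hv; apply: (lblob_interval gD kg); lia.
- have := @interval_le (la g) (n - la g + 1).
  rewrite -!divn2 in cm * => H.
  have : n - la g + 1 <= 2 * l.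
    by apply: H; [lia | lia | move=> v hv; apply: (rblob_interval gD kg); lia].
  move=> hb; exists (la g); split; [lia | lia | | apply: Or33; split => //; lia].
  by move=> v hv; apply: (rblob_interval gD kg); lia.
- by move: ag; rewrite /is_arc /is_prop kg.
Qed.

Lemma touch_cnt g1 g2 v : 1 <= v <= n -> g1 \in D -> g2 \in rem g1 D ->
  touches v g1 -> touches v g2 -> False.
Proof.
move=> hv g1D g2r t1 t2; have := Htouch hv.
rewrite (permP (perm_to_rem g1D)) /= t1.
have : 0 < count (touches v) (rem g1 D) by rewrite -has_count; apply/hasP; exists g2.
by lia.
Qed.

Lemma crit_unique g1 g2 : g1 \in D -> g2 \in rem g1 D ->
  crit n l g1 -> crit n l g2 -> False.
Proof.
move=> g1D g2r c1 c2; have g2D : g2 \in D := mem_rem g2r.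
have a1 : is_arc g1 by case/andP: c1.
have a2 : is_arc g2 by case/andP: c2.
have [x1 [x11 x12 I1 K1]] := crit_info g1D c1.
have [x2 [x21 x22 I2 K2]] := crit_info g2D c2.
have e : x1 = x2.
  have h1 : x1 <= x2 < x1 + 2 * l.
    apply/negPn/negP => nw.
    have := interval_strict x11 x12 I1 _ (I2 x2 _) nw; lia.
  have h2 : x2 <= x1 < x2 + 2 * l.
    apply/negPn/negP => nw.
    have := interval_strict x21 x22 I2 _ (I1 x1 _) nw; lia.
  lia.
subst x2.
have ta : forall g, is_arc g -> touches (la g) g by move=> g _; rewrite /touches eqxx.
have tc : forall g, is_arc g -> touches (lc g) g by move=> g ag; rewrite /touches ag eqxx orbT.
case: K1 => [[k1 e1 f1]|[k1 e1 f1]|[k1 e1 f1]];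
case: K2 => [[k2 e2 f2]|[k2 e2 f2]|[k2 e2 f2]].
- apply: (@touch_cnt g1 g2 (la g1)) => //; [lia | exact: ta | (have -> : la g1 = la g2 by lia); exact: ta].
- apply: (@touch_cnt g1 g2 (lc g1)) => //; [lia | exact: tc | (have -> : lc g1 = lc g2 by lia); exact: tc].
- apply: (@touch_cnt g1 g2 (la g1)) => //; [lia | exact: ta | (have -> : la g1 = la g2 by lia); exact: ta].
- apply: (@touch_cnt g1 g2 (lc g1)) => //; [lia | exact: tc | (have -> : lc g1 = lc g2 by lia); exact: tc].
- apply: (@touch_cnt g1 g2 (lc g1)) => //; [lia | exact: tc | (have -> : lc g1 = lc g2 by lia); exact: tc].
- lia.
- apply: (@touch_cnt g1 g2 (la g1)) => //; [lia | exact: ta | (have -> : la g1 = la g2 by lia); exact: ta].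
- lia.
- apply: (@touch_cnt g1 g2 (la g1)) => //; [lia | exact: ta | (have -> : la g1 = la g2 by lia); exact: ta].
Qed.

End Comb.


Lemma count_pairs v m k :
  count (fun i => (2 * i + 1 == v) || (2 * i + 2 == v)) (iota m k) =
  ((2 * m < v) && (v <= 2 * (m + k))).
Proof.
elim: k m => [|k IH] m /=; first by case: (ltnP (2 * m) v) => /= c; lia.
rewrite IH; lia.
Qed.

Lemma count_geq v m k : count (fun u => v <= u) (iota m k) = (m + k) - maxn m v.
Proof.
elim: k m => [|k IH] m /=; first by lia.
rewrite IH; case: (leqP v m) => c /=; lia.
Qed.

Definition D0 (n l : nat) : seq line :=
  [seq Line (2 * i + 1) (2 * i + 2) LBlob | i <- iota 0 l] ++
  [seq Line v (2 * n + 1 - v) Propag | v <- iota (2 * l + 1) (n - 2 * l)].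

Lemma memD0 n l g : g \in D0 n l ->
  (exists2 i, i < l & g = Line (2 * i + 1) (2 * i + 2) LBlob) \/
  (exists2 v, 2 * l + 1 <= v <= n & g = Line v (2 * n + 1 - v) Propag).
Proof.
rewrite mem_cat => /orP [/mapP [i]|/mapP [v]]; rewrite mem_iota => hi ->.
  by left; exists i => //; lia.
by right; exists v => //; lia.
Qed.

Lemma D0_half n l : 2 * l < n -> half_diagram n l (D0 n l).
Proof.
move=> hn; rewrite /half_diagram /D0.
apply/and3P; split.
- rewrite count_cat !count_map.
  rewrite (@eq_count _ _ predT) ?count_predT ?size_iota //.
  by rewrite (@eq_count _ _ pred0) ?count_pred0 ?addn0.
- rewrite count_cat !count_map.
  rewrite (@eq_count _ _ pred0) ?count_pred0 ?add0n //.
  by rewrite (@eq_count _ _ predT) ?count_predT ?size_iota.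
apply/and4P; split.
- apply/allP => v; rewrite mem_iota => hv.
  rewrite count_cat !count_map.
  rewrite (@eq_count _ _ (fun i => (2 * i + 1 == v) || (2 * i + 2 == v))) //.
  rewrite count_pairs.
  rewrite (@eq_count _ _ (pred1 v)); last by move=> u; rewrite /= /touches /= orbF.
  rewrite count_uniq_mem ?iota_uniq // mem_iota.
  by apply/eqP; lia.
- rewrite all_cat !all_map; apply/andP; split; apply/allP => v; rewrite mem_iota => hv /=.
    by apply/andP; split; [|apply/andP; split]; lia.
  apply/andP; split; first by lia.
  apply/andP; split; first by lia.
  rewrite count_cat !count_map.
  rewrite (@eq_count _ _ pred0) ?count_pred0 ?add0n //.
  rewrite (@eq_count _ _ (fun u => v <= u)) // count_geq.
  by apply/eqP; lia.
- apply/allP => g /memD0 [[i hi ->]|[v hv ->]]; apply/allP => h _ //=.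
  by case: (is_prop h) => /=; apply/negP => /andP [h1 /andP [h2 _]] || apply/negP => /andP [h1 h2]; lia.
- apply/allP => g /memD0 [[i hi ->]|[v hv ->]] //=.
  apply/allP => h /memD0 [[j hj ->]|[u hu ->]] /=; rewrite /encloses /=.
    by apply/negP => /andP [h1 h2]; lia.
  by rewrite andbT; lia.
Qed.

Local Open Scope ring_scope.
Unset Implicit Arguments.
Set Strict Implicit.

Theorem lemma4p3p1 (k : fieldType) (n l : nat) (q Q1 Q2 : k) :
  (2 * l < n)%N -> (6 <= 2 * l)%N ->
  (2 * l)%N.-primitive_root q ->
  nonintegral q Q1 -> nonintegral q Q2 ->
  (forall D : seq line, half_diagram n l D ->
     exists x : k, specializes_to (h3 k n l D) (point q Q1 Q2) x) /\
  (exists (D : seq line) (x : k), half_diagram n l D /\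
     specializes_to (h3 k n l D) (point q Q1 Q2) x /\ x != 0).
Proof.
move=> hn hl pr nQ1 nQ2.
have l1 : (1 < l)%N by lia.
have MA := fun D HD => @main_alg k n l q Q1 Q2 pr l1 nQ1 nQ2 D
   (fun g gD ag => @mq_bound n l D HD hl hn g gD ag)
   (fun g1 g2 g1D g2r c1 c2 => @crit_unique n l D HD hl hn g1 g2 g1D g2r c1 c2).
split; first by move=> D HD; exact: (MA D HD).2.
have HD := D0_half hn.
have hc : has (crit n l) (D0 n l).
  apply/hasP; exists (Line (2 * (l - 1) + 1) (2 * (l - 1) + 2) LBlob).
    by rewrite mem_cat; apply/orP; left; apply/mapP; exists (l - 1)%N => //; rewrite mem_iota; lia.
  by rewrite /crit /mq /= -!divn2; apply/eqP; lia.
have [x [Sx x0]] := (MA _ HD).1 hc.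
by exists (D0 n l), x.
Qed.
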